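(* For any $(k,c,\delta,\epsilon)$-SKE protocol $\Pi$ in a full-access multipath setting $\mathscr S$, there is a $(k,c,0,\epsilon')$-SKE protocol $\Pi'$ over $\mathscr S$ with $\epsilon'\le\epsilon+\delta$.
   Context: Multipath setting: an $(n,t_a,t_b,t_e,\lambda)$-multipath setting has a sender Alice, a receiver Bob and a passive, computationally unbounded eavesdropper Eve, connected by $n$ disjoint paths; Alice and Bob share no key. At any time Alice, Bob and Eve access at most $t_a,t_b,t_e$ paths respectively. Time is divided into intervals of $\lambda$ bits sent over a path; at the start of each interval every party chooses its accessed paths and keeps them for the interval. Eve's view is everything sent over her accessed paths. The setting is full-access if $t_a=t_b=n$ (so Alice and Bob both see the whole communication transcript). Protocols may be interactive and use local randomness. SKE protocol: a $(k,c,\delta,\epsilon)$-SKE protocol uses $c$ bits of communication and lets Alice compute a key $S\in\{0,1\}^k$ and Bob an estimate $\hat S\in\{0,1\}^k$ with $\Pr(\hat S\neq S)\le\delta$ and $SD([S,View_E],[U_k,View_E])\le\epsilon$, where $View_E$ is Eve's view, $U_k$ an independent uniform $k$-bit string, and $SD(X,Y)=\frac12\sum_x|\Pr(X=x)-\Pr(Y=x)|$. *)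

(* Defs.v *)
From HB Require Import structures.
From mathcomp Require Import all_boot all_order all_algebra.
From mathcomp Require Import reals.
Unset Printing Implicit Defensive.
Import Order.TTheory GRing.Theory Num.Theory.
Local Open Scope ring_scope.

(* A transmission: (interval index, path, direction (true = Alice -> Bob), bit). *)
Definition tr (n : nat) : Type := (nat * 'I_n * bool * bool)%type.
Definition tr_int {n} (t : tr n) : nat := t.1.1.1.
Definition tr_path {n} (t : tr n) : 'I_n := t.1.1.2.
Definition tr_dir {n} (t : tr n) : bool := t.1.2.
Definition tr_bit {n} (t : tr n) : bool := t.2.

Definition is_dist {R : realType} {T : finType} (p : T -> R) : Prop :=
  (forall x, 0 <= p x) /\ \sum_(x : T) p x = 1.

(* An interactive protocol in a FULL-ACCESS n-path setting (t_a = t_b = n):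
   both parties see every transmitted bit. *)
Record protocol (R : realType) (n k : nat) := Protocol {
  RA : finType; RB : finType;
  pA : RA -> R; pB : RB -> R;
  sched : seq (tr n) -> nat * 'I_n * bool;
  msgA : RA -> seq (tr n) -> bool;
  msgB : RB -> seq (tr n) -> bool;
  outA : RA -> seq (tr n) -> k.-tuple bool;
  outB : RB -> seq (tr n) -> k.-tuple bool }.
Arguments RA {R n k} _. Arguments RB {R n k} _.
Arguments pA {R n k} _ _. Arguments pB {R n k} _ _.
Arguments sched {R n k} _ _. Arguments msgA {R n k} _ _ _.
Arguments msgB {R n k} _ _ _. Arguments outA {R n k} _ _ _.
Arguments outB {R n k} _ _ _.

Fixpoint run {R n k} (P : protocol R n k) (ra : RA P) (rb : RB P) (m : nat)
  : seq (tr n) :=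
  match m with
  | 0 => [::]
  | m'.+1 =>
      let h := run P ra rb m' in
      let s := sched P h in
      rcons h (s.1.1, s.1.2, s.2, if s.2 then msgA P ra h else msgB P rb h)
  end.

Definition valid {R n k} (lambda c : nat) (P : protocol R n k) : Prop :=
  is_dist (pA P) /\ is_dist (pB P) /\
  forall ra rb,
    let t := run P ra rb c in
    sorted leq (map tr_int t) /\
    forall (i : nat) (p : 'I_n),
      (count (fun x => (tr_int x == i) && (tr_path x == p)) t <= lambda)%N.

(* A passive adaptive eavesdropper: with local randomness RE, at the start of
   interval i it chooses a set of paths (of size <= t_e) as a function of its
   randomness and of everything it observed in earlier intervals. *)
Record eve (R : realType) (n : nat) := Eve {
  RE : finType;
  pE : RE -> R;
  choose : RE -> seq (tr n) -> nat -> {set 'I_n} }.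
Arguments RE {R n} _. Arguments pE {R n} _ _. Arguments choose {R n} _ _ _ _.

Definition eve_ok {R n} (te : nat) (E : eve R n) : Prop :=
  is_dist (pE E) /\ forall re h i, (#|choose E re h i| <= te)%N.

Definition eve_obs {R n} (E : eve R n) (re : RE E) (t : seq (tr n)) : seq (tr n) :=
  foldl (fun obs x =>
           let prev := [seq o <- obs | (tr_int o < tr_int x)%N] in
           if tr_path x \in choose E re prev (tr_int x) then rcons obs x else obs)
        [::] t.

Definition law {R : realType} {O : finType} (p : O -> R) {T : eqType}
  (X : O -> T) (x : T) : R := \sum_(w : O | X w == x) p w.

Definition SD {R : realType} {O1 O2 : finType} (p1 : O1 -> R) (p2 : O2 -> R)
  {T : eqType} (X1 : O1 -> T) (X2 : O2 -> T) : R :=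
  2^-1 * \sum_(x <- undup ([seq X1 w | w <- enum O1] ++ [seq X2 w | w <- enum O2]))
            `|law p1 X1 x - law p2 X2 x|.

Definition omega {R n k} (P : protocol R n k) (E : eve R n) : finType :=
  (RA P * RB P * RE E)%type.
Definition pomega {R n k} {P : protocol R n k} {E : eve R n}
  (w : omega P E) : R := pA P w.1.1 * pB P w.1.2 * pE E w.2.

Definition keyA {R n k} (c : nat) {P : protocol R n k} {E : eve R n} (w : omega P E) :=
  outA P w.1.1 (run P w.1.1 w.1.2 c).
Definition viewE {R n k} (c : nat) {P : protocol R n k} {E : eve R n} (w : omega P E)
  : (RE E * seq (tr n))%type :=
  (w.2, eve_obs E w.2 (run P w.1.1 w.1.2 c)).

Definition SKE {R : realType} {n k : nat} (te lambda c : nat) (delta eps : R) (P : protocol R n k)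
  : Prop :=
  valid lambda c P /\
  \sum_(r : (RA P * RB P)%type |
          outB P r.2 (run P r.1 r.2 c) != outA P r.1 (run P r.1 r.2 c))
     pA P r.1 * pB P r.2 <= delta /\
  (forall E : eve R n, eve_ok te E ->
     SD (@pomega R n k P E)
        (fun u : (omega P E * k.-tuple bool)%type => pomega u.1 / 2 ^+ k)
        (fun w => (keyA c w, viewE c w))
        (fun u : (omega P E * k.-tuple bool)%type => (u.2, viewE c u.1))
     <= eps).

(* Main.v *)
Require Import Defs.
From HB Require Import structures.
From mathcomp Require Import all_boot all_order all_algebra.
From mathcomp Require Import reals.
From Stdlib Require Import FunctionalExtensionality.
Import Order.TTheory GRing.Theory Num.Theory.
Local Open Scope ring_scope.

Lemma run_rect (R : realType) n k (P : protocol R n k) ra rb ra' rb' m :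
  run P ra rb m = run P ra' rb' m -> run P ra rb' m = run P ra rb m.
Proof.
elim: m => [//|m IH] /=.
move=> /eqP; rewrite eqseq_rcons => /andP[/eqP H1 /eqP H2].
rewrite IH //; congr rcons.
move: H2; rewrite -H1.
case: (sched P (run P ra rb m)) => [[a b] [] ] //= [->] //.
Qed.

Lemma part_sum (R : realType) (I : finType) (T : eqType) (key : I -> T) (F : I -> R) :
  \sum_i F i = \sum_(t <- undup (map key (enum I))) \sum_(i | key i == t) F i.
Proof.
symmetry; under eq_bigr do rewrite big_mkcond; rewrite exchange_big /=.
apply: eq_bigr => i _.
rewrite -(big_mkcond (fun t => key i == t) (fun _ => F i)) -big_filter.
have -> : [seq t <- undup [seq key i0 | i0 <- enum I] | key i == t] = [:: key i].
  rewrite (eq_filter (a2 := pred1 (key i))); last by move=> x; rewrite /= eq_sym.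
  apply: filter_pred1_uniq; first exact: undup_uniq.
  by rewrite mem_undup; apply: map_f; rewrite mem_enum.
by rewrite big_seq1.
Qed.

Lemma sum_ind_uniq (R : realType) (T : eqType) (L : seq T) (y : T) :
  uniq L -> y \in L -> \sum_(x <- L) ((y == x)%:R : R) = 1.
Proof.
move=> uL yL.
have -> : \sum_(x <- L) ((y == x)%:R : R) = \sum_(x <- L | y == x) 1.
  by rewrite [RHS]big_mkcond; apply: eq_bigr => x _; case: (y == x).
rewrite -big_filter.
have -> : [seq x <- L | y == x] = [:: y].
  rewrite (eq_filter (a2 := pred1 y)); last by move=> x; rewrite /= eq_sym.
  exact: filter_pred1_uniq.
by rewrite big_seq1.
Qed.

Lemma law_ind (R : realType) (O : finType) (p : O -> R) (T : eqType) (X : O -> T) x :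
  law p X x = \sum_w p w * (X w == x)%:R.
Proof.
rewrite /law big_mkcond; apply: eq_bigr => w _; case: (X w == x).
  by rewrite mulr1. by rewrite mulr0.
Qed.

Lemma SD_list (R : realType) (O1 O2 : finType) (p1 : O1 -> R) (p2 : O2 -> R)
  (T : eqType) (X1 : O1 -> T) (X2 : O2 -> T) (L : seq T) :
  uniq L -> (forall w, X1 w \in L) -> (forall w, X2 w \in L) ->
  SD p1 p2 X1 X2 = 2^-1 * \sum_(x <- L) `|law p1 X1 x - law p2 X2 x|.
Proof.
move=> uL h1 h2; rewrite /SD; congr (_ * _).
set D := undup _.
have zero x : x \notin D -> `|law p1 X1 x - law p2 X2 x| = 0.
  move=> xD; rewrite /law !big_pred0 ?subrr ?normr0 //.
    move=> w; apply/negP => /eqP ex; move: xD; rewrite -ex mem_undup mem_cat.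
    by rewrite map_f ?orbT // mem_enum.
  move=> w; apply/negP => /eqP ex; move: xD; rewrite -ex mem_undup mem_cat.
  by rewrite map_f // mem_enum.
symmetry; rewrite (bigID (fun x => x \in D)) /= [X in _ + X]big1 ?addr0; last first.
  by move=> x /zero.
rewrite -big_filter; apply: perm_big; apply: uniq_perm.
- by rewrite filter_uniq.
- exact: undup_uniq.
move=> x; rewrite mem_filter /=.
case xD: (x \in D) => //=; symmetry.
symmetry; move: xD; rewrite mem_undup mem_cat => /orP[] /mapP[w _ ->]; [exact: h1 | exact: h2].
Qed.

Lemma SD_change (R : realType) (O1 O2 : finType) (p1 : O1 -> R) (p2 : O2 -> R)
  (T : eqType) (X1 X1' : O1 -> T) (X2 : O2 -> T) :
  (forall w, 0 <= p1 w) ->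
  SD p1 p2 X1' X2 <= SD p1 p2 X1 X2 + \sum_w p1 w * (X1 w != X1' w)%:R.
Proof.
move=> p0.
set L := undup ([seq X1 w | w <- enum O1] ++ [seq X1' w | w <- enum O1]
                 ++ [seq X2 w | w <- enum O2]).
have uL : uniq L by exact: undup_uniq.
have i1 w : X1 w \in L by rewrite mem_undup !mem_cat map_f ?mem_enum.
have i1' w : X1' w \in L by rewrite mem_undup !mem_cat map_f ?mem_enum ?orbT.
have i2 w : X2 w \in L by rewrite mem_undup !mem_cat map_f ?mem_enum ?orbT.
rewrite (@SD_list _ _ _ p1 p2 _ X1' X2 L uL) // (@SD_list _ _ _ p1 p2 _ X1 X2 L uL) //.
set Pr := \sum_w _.
have key : \sum_(x <- L) `|law p1 X1' x - law p1 X1 x| <= 2 * Pr.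
  apply: (@le_trans _ _ (\sum_(x <- L) \sum_w p1 w * (X1 w != X1' w)%:R *
        ((X1' w == x)%:R + (X1 w == x)%:R))).
    apply: ler_sum => x _.
    rewrite !law_ind -sumrB.
    apply: le_trans (ler_norm_sum _ _ _) _.
    apply: ler_sum => w _.
    rewrite -mulrBr normrM ger0_norm // -mulrA ler_wpM2l //.
    have [E|NE] := eqVneq (X1 w) (X1' w).
      by rewrite E subrr normr0 mulr_ge0 // addr_ge0.
    rewrite /= mul1r.
    case: (X1' w == x); case: (X1 w == x) => /=; rewrite ?subrr ?normr0 ?addr0 ?add0r ?sub0r ?subr0 ?normrN ?normr1 //.
    by rewrite addr_ge0.
  rewrite exchange_big /= /Pr mulr_sumr; rewrite le_eqVlt; apply/orP; left; apply/eqP; apply: eq_bigr => w _.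
  rewrite -mulr_sumr big_split /= !sum_ind_uniq //.
  by rewrite mulrC.
have tri : \sum_(x <- L) `|law p1 X1' x - law p2 X2 x| <=
   \sum_(x <- L) `|law p1 X1 x - law p2 X2 x| + 2 * Pr.
  apply: (@le_trans _ _ (\sum_(x <- L) (`|law p1 X1 x - law p2 X2 x| +
                          `|law p1 X1' x - law p1 X1 x|))).
    apply: ler_sum => x _; rewrite [X in _ <= X]addrC; exact: ler_distD.
  by rewrite big_split /= lerD2l.
apply: le_trans (ler_wpM2l _ tri) _.
  by rewrite invr_ge0 ler0n.
by rewrite mulrDr mulrA mulVf ?mul1r // pnatr_eq0.
Qed.

Definition cost {R : realType} {n k} (P : protocol R n k) (c : nat) (t : seq (tr n))
  (s : k.-tuple bool) : R :=
  \sum_(ra : RA P | [exists rb, run P ra rb c == t]) pA P ra * (outA P ra t != s)%:R.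

Definition gkey {R : realType} {n k} (P : protocol R n k) (c : nat) (t : seq (tr n))
  : k.-tuple bool :=
  Order.arg_min (nseq_tuple k false) xpredT (cost P c t).

Lemma gkey_min (R : realType) n k (P : protocol R n k) c t s :
  cost P c t (gkey P c t) <= cost P c t s.
Proof.
rewrite /gkey; case: arg_minP => // i _ H; exact: H.
Qed.

Lemma cost_slice (R : realType) n k (P : protocol R n k) c rb ra0 s :
  let t := run P ra0 rb c in
  \sum_(ra | run P ra rb c == t) pA P ra * (outA P ra (run P ra rb c) != s)%:R
  = cost P c t s.
Proof.
move=> t; rewrite /cost.
rewrite (eq_bigr (fun ra => pA P ra * (outA P ra t != s)%:R)); last first.
  by move=> ra /eqP ->.
apply: eq_bigl => ra; apply/idP/idP.
  by move=> h; apply/existsP; exists rb.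
case/existsP => rb' /eqP h.
have := @run_rect R n k P ra rb' ra0 rb c h.
by move=> h2; apply/eqP; rewrite h2 h.
Qed.

Lemma key_bound (R : realType) n k (P : protocol R n k) c :
  (forall ra, 0 <= pA P ra) -> (forall rb, 0 <= pB P rb) ->
  \sum_(r : (RA P * RB P)%type)
     pA P r.1 * pB P r.2 *
       (outA P r.1 (run P r.1 r.2 c) != gkey P c (run P r.1 r.2 c))%:R
  <= \sum_(r : (RA P * RB P)%type |
          outB P r.2 (run P r.1 r.2 c) != outA P r.1 (run P r.1 r.2 c))
     pA P r.1 * pB P r.2.
Proof.
move=> hA hB.
rewrite [X in _ <= X]big_mkcond /=.
rewrite -(pair_big xpredT xpredT (fun ra rb => pA P ra * pB P rb *
       (outA P ra (run P ra rb c) != gkey P c (run P ra rb c))%:R)) /=.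
rewrite -(pair_big xpredT xpredT (fun ra rb =>
   if outB P rb (run P ra rb c) != outA P ra (run P ra rb c) then pA P ra * pB P rb else 0)) /=.
rewrite exchange_big [X in _ <= X]exchange_big /=.
apply: ler_sum => rb _.
have -> : \sum_ra pA P ra * pB P rb *
       (outA P ra (run P ra rb c) != gkey P c (run P ra rb c))%:R =
     pB P rb * \sum_ra pA P ra *
       (outA P ra (run P ra rb c) != gkey P c (run P ra rb c))%:R.
  by rewrite mulr_sumr; apply: eq_bigr => ra _; rewrite mulrAC mulrC !mulrA.
have -> : \sum_ra (if outB P rb (run P ra rb c) != outA P ra (run P ra rb c)
                   then pA P ra * pB P rb else 0) =
     pB P rb * \sum_ra pA P ra *
       (outA P ra (run P ra rb c) != outB P rb (run P ra rb c))%:R.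
  rewrite mulr_sumr; apply: eq_bigr => ra _; rewrite eq_sym.
  by case: (_ != _); rewrite ?mulr1 ?mulr0 // mulrC.
apply: ler_wpM2l => //.
rewrite (@part_sum R _ _ (fun ra => run P ra rb c)).
rewrite [X in _ <= X](@part_sum R _ _ (fun ra => run P ra rb c)).
rewrite !big_seq; apply: ler_sum => t.
rewrite mem_undup => /mapP[ra0 _ ->].
have -> : \sum_(i | run P i rb c == run P ra0 rb c)
       pA P i * (outA P i (run P i rb c) != gkey P c (run P i rb c))%:R =
     \sum_(i | run P i rb c == run P ra0 rb c)
       pA P i * (outA P i (run P i rb c) != gkey P c (run P ra0 rb c))%:R.
  by apply: eq_bigr => i /eqP ->.
rewrite (@cost_slice R n k P c rb ra0 (gkey P c (run P ra0 rb c))).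
have -> : \sum_(i | run P i rb c == run P ra0 rb c)
       pA P i * (outA P i (run P i rb c) != outB P rb (run P i rb c))%:R =
     \sum_(i | run P i rb c == run P ra0 rb c)
       pA P i * (outA P i (run P i rb c) != outB P rb (run P ra0 rb c))%:R.
  by apply: eq_bigr => i /eqP ->.
rewrite (@cost_slice R n k P c rb ra0); exact: gkey_min.
Qed.

Theorem lemma1 (R : realType) (n te lambda k c : nat) (delta eps : R)
  (P : protocol R n k) :
  SKE te lambda c delta eps P ->
  exists (P' : protocol R n k) (eps' : R),
    SKE te lambda c 0 eps' P' /\ eps' <= eps + delta.
Proof.
case=> [[[hA sA] [[hB sB] hrun]] [herr hsd]].
pose P' := @Protocol R n k (RA P) (RB P) (pA P) (pB P) (sched P) (msgA P) (msgB P)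
   (fun _ t => gkey P c t) (fun _ t => gkey P c t).
have runE ra rb m : run P' ra rb m = run P ra rb m by elim: m => //= m ->.
exists P', (eps + delta); split; last exact: lexx.
split; [|split].
- split; [by []|split; [by []|]].
  by move=> ra rb; rewrite runE; exact: hrun.
- by rewrite big_pred0 // => r /=; rewrite eqxx.
move=> E hE.
have hpE := hE.1.
have e2 : (fun u : (omega P' E * k.-tuple bool)%type => (u.2, viewE c u.1)) =
          (fun u : (omega P E * k.-tuple bool)%type => (u.2, viewE c u.1)).
  by apply: functional_extensionality => u; rewrite /viewE /= runE.
rewrite e2.
apply: le_trans (@SD_change R (omega P E) _ pomega _ _
   (fun w : omega P E => (keyA c w, viewE c w)) _ _ _) _.
  by move=> [[ra rb] re]; rewrite /pomega !mulr_ge0 ?hA ?hB ?hpE.1.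
apply: lerD; first exact (hsd E hE).
apply: le_trans _ herr.
apply: le_trans _ (@key_bound R n k P c hA hB).
pose G := fun (r : (RA P * RB P)%type) (re : RE E) =>
   pA P r.1 * pB P r.2 * (outA P r.1 (run P r.1 r.2 c) != gkey P c (run P r.1 r.2 c))%:R
   * pE E re.
rewrite (eq_bigr (fun w : omega P E => G w.1 w.2)); last first.
  move=> [[ra rb] re] _; rewrite /G /pomega /keyA /viewE /= runE xpair_eqE eqxx andbT.
  by rewrite mulrAC.
rewrite -(pair_big xpredT xpredT G) /= /G.
rewrite le_eqVlt; apply/orP; left; apply/eqP.
apply: eq_bigr => r _.
by rewrite -mulr_sumr hpE.2 mulr1.
Qed.
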